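(* Let $T\in\mathbb{R}^{n\times n}$ be substochastic and such that $A=I-T$ is a lower Hessenberg invertible M-matrix. Let $P_{GS}=\operatorname{tril}(A)^{-1}(\operatorname{tril}(A)-A)$ and $P_{AGS}=\operatorname{triu}(A)^{-1}(\operatorname{triu}(A)-A)$. Then $\rho(P_{GS})\geq\rho(P_{AGS})$.
   Context: $T$ is substochastic if $T\geq 0$ entrywise and $T\mathbf{1}\leq\mathbf{1}$, with $\mathbf{1}$ the all-ones vector. $A$ is lower Hessenberg if $A_{ij}=0$ whenever $j>i+1$. $\operatorname{tril}(A)$ (resp. $\operatorname{triu}(A)$) is the lower (resp. upper) triangular part of $A$ including the diagonal. $\rho(\cdot)$ denotes the spectral radius. *)

(* Defs.v *)
From HB Require Import structures.
From mathcomp Require Import all_boot all_order all_algebra.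
From mathcomp Require Import complex.
Set Implicit Arguments. Unset Strict Implicit. Unset Printing Implicit Defensive.
Import Order.TTheory GRing.Theory Num.Theory.
Local Open Scope ring_scope.

Section Defs.
Variable R : rcfType.

Definition eigenvalues (n : nat) (A : 'M[R]_n) : seq R[i] :=
  sval (closed_field_poly_normal (char_poly (map_mx (fun x : R => x%:C%C) A))).

(* Spectral radius: max modulus of the (complex) eigenvalues (0 if n = 0). *)
Definition spectral_radius (n : nat) (A : 'M[R]_n) : R :=
  \big[Num.max/0]_(z <- eigenvalues A) ComplexField.Normc.normc z.

Definition nonneg_mx (m n : nat) (A : 'M[R]_(m, n)) : Prop :=
  forall i j, 0 <= A i j.

Definition substochastic (n : nat) (T : 'M[R]_n) : Prop :=
  nonneg_mx T /\ forall i, \sum_j T i j <= 1.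

Definition lower_hessenberg (n : nat) (A : 'M[R]_n) : Prop :=
  forall i j : 'I_n, (i.+1 < j)%N -> A i j = 0.

Definition invertible_M_matrix (n : nat) (A : 'M[R]_n) : Prop :=
  exists (s : R) (B : 'M[R]_n),
    nonneg_mx B /\ A = s%:M - B /\ spectral_radius B < s.

Definition tril (n : nat) (A : 'M[R]_n) : 'M[R]_n :=
  \matrix_(i, j) (if (j <= i)%N then A i j else 0).

Definition triu (n : nat) (A : 'M[R]_n) : 'M[R]_n :=
  \matrix_(i, j) (if (i <= j)%N then A i j else 0).

End Defs.

(* Main.v *)
Require Import Defs.
From HB Require Import structures.
From mathcomp Require Import all_boot all_order all_algebra.
From mathcomp Require Import complex polyrcf.
From mathcomp Require Import lra ring.
Import Order.TTheory GRing.Theory Num.Theory.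
Local Open Scope ring_scope.

Section Main.
Variable R : rcfType.

Lemma horner_char n (P : 'M[R]_n) s : (char_poly P).[s] = \det (s%:M - P).
Proof.
have -> : s%:M - P = map_mx (horner_eval s) (char_poly_mx P).
  apply/matrixP => i j; rewrite !mxE /horner_eval.
  case: (i == j); rewrite /= !hornerE //.
by rewrite det_map_mx.
Qed.
Arguments horner_char {n}.

Lemma poly_le0_right (p : {poly R}) s0 :
  (forall s, s0 < s -> p.[s] <= 0) -> p.[s0] <= 0.
Proof.
move=> H; rewrite leNgt; apply/negP => hp.
have [d d0 Hd] := poly_cont s0 p hp.
have h1 : s0 < s0 + d / 2%:R by lra.
have := Hd (s0 + d / 2%:R); have := H _ h1.
have -> : s0 + d / 2%:R - s0 = d / 2%:R by lra.
rewrite ger0_norm; last lra.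
move=> hle /(_ ltac:(lra)).
rewrite ltr_norml; lra.
Qed.
Arguments poly_le0_right {p s0}.

Lemma det_schur n (x : 'M[R]_1) (u : 'M_(1,n)) (v : 'M_(n,1)) (N : 'M_n) :
  N \in unitmx ->
  \det (block_mx x u v N : 'M_(1 + n)) = \det N * (x - u *m invmx N *m v) 0 0.
Proof.
move=> Nu.
pose K : 'M_(1 + n) := block_mx 1%:M 0 (- (invmx N *m v)) 1%:M.
have dK : \det K = 1 by rewrite det_lblock !det1 mulr1.
rewrite -[LHS]mulr1 -dK -det_mulmx mulmx_block !mulmx1 !mulmx0 !add0r.
by rewrite !mulmxN mulKVmx // subrr det_ublock det_mx11 mulrC mulmxA.
Qed.
Arguments det_schur {n}.

Lemma charpos n (P : 'M[R]_n) t :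
  (forall s, t <= s -> \det (s%:M - P) != 0) -> 0 < \det (t%:M - P).
Proof.
move=> H; have mon := char_poly_monic P.
have lc : lead_coef (char_poly P) = 1 by apply/monicP.
have [N HN] : exists N, forall x, x >= N -> (char_poly P).[x] >= 1.
  by rewrite -lc; apply: poly_pinfty_gt_lc; rewrite lc ltr01.
rewrite -horner_char ltNge; apply/negP => hle.
have hx : t <= Num.max N t by rewrite le_max lexx orbT.
have h2 : 1 <= (char_poly P).[Num.max N t] by apply: HN; rewrite le_max lexx.
have hm : (char_poly P).[t] <= 0 <= (char_poly P).[Num.max N t].
  by rewrite hle (le_trans ler01 h2).
have [r] := poly_ivt hx hm.
move=> /andP [tr _] /rootP.
by rewrite horner_char; apply/eqP/H.
Qed.
Arguments charpos {n P t}.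

Lemma max_root (p : {poly R}) x : p != 0 -> root p x ->
  exists r, [/\ x <= r, root p r & forall y, r < y -> ~~ root p y].
Proof.
move=> p0 rx.
have Hs := roots_on_rootsR p0.
have inR y : root p y = (y \in rootsR p) by rewrite -Hs.
pose r := foldr Num.max x (rootsR p).
have [xr [rin rmax]] : x <= r /\ (r \in x :: rootsR p) /\ forall y, y \in rootsR p -> y <= r.
  rewrite /r; elim: (rootsR p) => [|a s [IH1 [IH2 IH3]]] /=.
    by rewrite mem_seq1 eqxx.
  split; first by rewrite le_max IH1 orbT.
  split.
    rewrite /Num.max; case: ifP => _; rewrite !inE ?eqxx ?orbT //.
    by move: IH2; rewrite inE => /orP[->|->]; rewrite ?orbT.
  move=> y; rewrite inE => /orP[/eqP ->|ys]; first by rewrite le_max lexx.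
  by rewrite le_max IH3 ?orbT.
exists r; split => //.
  by move: rin; rewrite inE => /orP[/eqP ->|]; rewrite // inR.
by move=> y ry; apply/negP; rewrite inR => /rmax; rewrite leNgt ry.
Qed.
Arguments max_root {p x}.

Lemma zhelp (V : zmodType) (X C A B : V) : X - C = X - (A + B + C) + (A + B).
Proof. by rewrite (opprD (A + B)) [RHS]addrC addrCA addNKr. Qed.

Lemma zhelp2 (V : zmodType) (D L U : V) : (D - U) - (D - L - U) = L.
Proof. by rewrite opprB addrA subrK opprB addrC subrK. Qed.

Lemma nnM m n p (A : 'M[R]_(m, n)) (B : 'M[R]_(n, p)) :
  nonneg_mx A -> nonneg_mx B -> nonneg_mx (A *m B).
Proof. by move=> hA hB i j; rewrite mxE sumr_ge0 // => k _; rewrite mulr_ge0. Qed.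

Lemma nnD m n (A B : 'M[R]_(m, n)) :
  nonneg_mx A -> nonneg_mx B -> nonneg_mx (A + B).
Proof. by move=> hA hB i j; rewrite mxE addr_ge0. Qed.

Lemma invpos n : forall (P : 'M[R]_n) t, nonneg_mx P ->
  (forall s, t <= s -> \det (s%:M - P) != 0) ->
  forall y : 'cV_n, nonneg_mx ((t%:M - P) *m y) -> nonneg_mx y.
Proof.
elim: n => [|n IH] P t P0 Hdet y Hy; first by case.
pose P' : 'M_(1 + n) := P.
pose a := ulsubmx P'; pose u := ursubmx P'; pose v := dlsubmx P'; pose Q := drsubmx P'.
have a0 : nonneg_mx a by move=> i j; rewrite /a /P' !mxE; apply: P0.
have u0 : nonneg_mx u by move=> i j; rewrite /u /P' !mxE; apply: P0.
have v0 : nonneg_mx v by move=> i j; rewrite /v /P' !mxE; apply: P0.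
have Q0 : nonneg_mx Q by move=> i j; rewrite /Q /P' !mxE; apply: P0.
have blk s : s%:M - P' = block_mx (s%:M - a) (-u) (-v) (s%:M - Q).
  have -> : P' = block_mx a u v Q by rewrite /a /u /v /Q submxK.
  by rewrite (scalar_mx_block 1 n) opp_block_mx add_block_mx !add0r.
have HQ : forall s, t <= s -> \det (s%:M - Q) != 0.
  move=> s1 ts1; apply/negP => /eqP d0.
  have pQ0 : char_poly Q != 0 by apply: monic_neq0; apply: char_poly_monic.
  have [s0 [s10 rs0 nr]] := max_root pQ0 (introT rootP (etrans (horner_char Q s1) d0)).
  have Hs s : s0 < s -> (forall s', s <= s' -> \det (s'%:M - Q) != 0).
    move=> hs s' hs'; rewrite -horner_char; apply: nr; exact: lt_le_trans hs hs'.
  have key : forall s, s0 < s ->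
      (char_poly P' - char_poly Q * ('X - (a 0 0)%:P)).[s] <= 0.
    move=> s hs.
    have dpos := charpos (Hs s hs).
    have Nu : (s%:M - Q) \in unitmx by rewrite unitmxE unitfE gt_eqF.
    have g0 : nonneg_mx (invmx (s%:M - Q) *m v).
      apply: (IH Q s Q0 (Hs s hs)); by rewrite mulKVmx.
    rewrite !hornerE !horner_char /P' blk det_schur //.
    rewrite !(mulNmx, mulmxN, opprK) -mulmxA.
    set w := u *m (invmx (s%:M - Q) *m v).
    have w0 : 0 <= w 0 0 by apply: nnM.
    rewrite !mxE eqxx mulr1n.
    move: w0; rewrite /w mxE => w0; nra.
  have := poly_le0_right key.
  rewrite !hornerE (rootP rs0) mul0r subr0 /P' horner_char.
  have := charpos (fun s (hs : s0 <= s) => Hdet s (le_trans ts1 (le_trans s10 hs))).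
  by rewrite /P'; move=> h1 h2; have := lt_le_trans h1 h2; rewrite ltxx.
have dN := charpos HQ.
have dP : 0 < \det (t%:M - P') := charpos Hdet.
have Nu : (t%:M - Q) \in unitmx by rewrite unitmxE unitfE gt_eqF.
set N := t%:M - Q.
pose y1 := usubmx (y : 'cV_(1 + n)); pose y2 := dsubmx (y : 'cV_(1 + n)).
have Y : (y : 'cV_(1 + n)) = col_mx y1 y2 by rewrite vsubmxK.
pose f1 := (t%:M - a) *m y1 - u *m y2.
pose f2 := - v *m y1 + N *m y2.
have Ey : (t%:M - P') *m (y : 'cV_(1 + n)) = col_mx f1 f2.
  by rewrite Y blk mul_block_col mulNmx.
have Hy' : nonneg_mx ((t%:M - P') *m (y : 'cV_(1 + n))) := Hy.
rewrite Ey in Hy'.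
have f1nn : nonneg_mx f1.
  by move=> i j; have := Hy' (lshift n i) j; rewrite col_mxEu.
have f2nn : nonneg_mx f2.
  by move=> i j; have := Hy' (rshift 1 i) j; rewrite col_mxEd.
pose g := invmx N *m f2.
have gnn : nonneg_mx g by apply: (IH Q t Q0 HQ); rewrite mulKVmx.
pose S := t%:M - a - u *m invmx N *m v.
have SP : 0 < S 0 0.
  move: dP; rewrite blk det_schur // !(mulNmx, mulmxN, opprK) -/N.
  by rewrite pmulr_rgt0.
have E2 : y2 = invmx N *m f2 + invmx N *m v *m y1.
  by rewrite -mulmxA -mulmxDr /f2 mulNmx (addrC (- _)) addrNK mulKmx.
have E3 : S *m y1 = f1 + u *m g.
  rewrite /f1 E2 /S /g !mulmxBl !mulmxDr !mulmxA.
  exact: zhelp.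
have y1nn : nonneg_mx y1.
  move=> i j; rewrite !ord1.
  have : 0 <= (S *m y1) 0 0 by rewrite E3; apply: nnD => //; apply: nnM.
  by rewrite mxE big_ord1 pmulr_rge0.
have y2nn : nonneg_mx y2.
  apply: (IH Q t Q0 HQ); rewrite -/N.
  have -> : N *m y2 = f2 + v *m y1 by rewrite /f2 mulNmx addrC addNKr.
  by apply: nnD => //; apply: nnM.
move=> i j; rewrite -[y i j]/((y : 'cV_(1 + n)) i j) Y mxE.
by case: splitP => k _; [apply: y1nn | apply: y2nn].
Qed.
Arguments invpos {n}.


Lemma fwd_subst n p (L : 'M[R]_n) (Y : 'M[R]_(n, p)) :
  (forall i, 0 < L i i) -> (forall i j : 'I_n, (j < i)%N -> L i j <= 0) ->
  (forall i j : 'I_n, (i < j)%N -> L i j = 0) ->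
  nonneg_mx (L *m Y) -> nonneg_mx Y.
Proof.
move=> Ld Ll Lu HY i j.
suff H : forall k (i' : 'I_n), (i' < k)%N -> 0 <= Y i' j by apply: (H i.+1).
elim=> [|k IH] i' // hi'.
case: (ltnP i' k) => [/IH //| hk].
have ei : nat_of_ord i' = k by apply/eqP; rewrite eqn_leq hk -ltnS hi'.
have := HY i' j; rewrite mxE (bigD1 i') //=.
have S : \sum_(l | l != i') L i' l * Y l j <= 0.
  apply: sumr_le0 => l ll.
  case: (ltngtP l i') => h.
  - by rewrite mulr_le0_ge0 // ?Ll // IH // -ei.
  - by rewrite Lu // mul0r.
  - by move: ll; rewrite (val_inj h) eqxx.
move: S; set s := \sum_(l | _) _ => S H.
have : 0 <= L i' i' * Y i' j by lra.
by rewrite pmulr_rge0.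
Qed.

Lemma sum_diag n (c : R) (f : 'I_n -> R) i :
  \sum_j (if i == j then c else 0) * f j = c * f i.
Proof.
rewrite (bigD1 i) //= eqxx big1 ?addr0 // => j ji.
by rewrite eq_sym (negbTE ji) mul0r.
Qed.

Lemma horner_charG (F : comNzRingType) n (P : 'M[F]_n) s :
  (char_poly P).[s] = \det (s%:M - P).
Proof.
have -> : s%:M - P = map_mx (horner_eval s) (char_poly_mx P).
  apply/matrixP => i j; rewrite !mxE /horner_eval.
  case: (i == j); rewrite /= !hornerE //.
by rewrite det_map_mx.
Qed.

Local Notation C := (R[i]).
Local Notation toC := (fun x : R => x%:C%C).

Lemma eig_spec n (P : 'M[R]_n) :
  char_poly (map_mx toC P) = \prod_(z <- eigenvalues P) ('X - z%:P).
Proof.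
rewrite /eigenvalues; case: closed_field_poly_normal => r /= ->.
by rewrite (monicP (char_poly_monic _)) scale1r.
Qed.

Lemma eig_root n (P : 'M[R]_n) z :
  (z \in eigenvalues P) = root (char_poly (map_mx toC P)) z.
Proof. by rewrite eig_spec root_prod_XsubC. Qed.

Lemma rho_ge0 n (P : 'M[R]_n) : 0 <= spectral_radius P.
Proof.
rewrite /spectral_radius; elim: (eigenvalues P) => [|a s IH].
  by rewrite big_nil.
by rewrite big_cons le_max IH orbT.
Qed.

Lemma rho_ge n (P : 'M[R]_n) z : z \in eigenvalues P ->
  ComplexField.Normc.normc z <= spectral_radius P.
Proof.
rewrite /spectral_radius; elim: (eigenvalues P) => [|a s IH] //.
rewrite inE big_cons le_max => /orP[/eqP ->|/IH ->]; by rewrite ?lexx ?orbT.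
Qed.

Lemma rho_le n (P : 'M[R]_n) c : 0 <= c ->
  (forall z, z \in eigenvalues P -> ComplexField.Normc.normc z <= c) ->
  spectral_radius P <= c.
Proof.
rewrite /spectral_radius => c0; elim: (eigenvalues P) => [|a s IH] H.
  by rewrite big_nil.
rewrite big_cons ge_max H ?inE ?eqxx //= IH // => z zs.
by apply: H; rewrite inE zs orbT.
Qed.

Lemma normcR (x : R) : ComplexField.Normc.normc (x%:C)%C = `|x|.
Proof. by rewrite /ComplexField.Normc.normc /= !expr2 mul0r addr0 -expr2 sqrtr_sqr. Qed.

Lemma real_root_rho n (P : 'M[R]_n) s : \det (s%:M - P) = 0 ->
  `|s| <= spectral_radius P.
Proof.
move=> d0; rewrite -normcR; apply: rho_ge; rewrite eig_root.
rewrite -map_char_poly; apply/rootP.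
by rewrite horner_map /= horner_charG d0.
Qed.

Lemma eigvec n (P : 'M[R]_n) z : z \in eigenvalues P ->
  exists2 y : 'cV[C]_n, y != 0 & map_mx toC P *m y = z *: y.
Proof.
rewrite eig_root => /rootP; rewrite horner_charG => /eqP.
rewrite -det_tr => /det0P [v v0 hv].
exists v^T; first by rewrite trmx_eq0.
have : (z%:M - map_mx toC P) *m v^T = 0.
  by rewrite -[_ *m _]trmxK trmx_mul trmxK hv trmx0.
by rewrite mulmxBl mul_scalar_mx => /eqP; rewrite subr_eq0 => /eqP <-.
Qed.


Local Notation nc := (@ComplexField.Normc.normc R).

Lemma normCE (x : C) : `|x| = (nc x)%:C%C.
Proof. by []. Qed.

Lemma nc_ge0 (x : C) : 0 <= nc x.
Proof. by case: x => a b; rewrite /ComplexField.Normc.normc sqrtr_ge0. Qed.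

Lemma normc_comb n (a b : 'I_n -> R) (y : 'I_n -> C) z :
  (forall j, 0 <= a j) -> (forall j, 0 <= b j) ->
  nc (\sum_j (a j)%:C%C * y j + z * \sum_j (b j)%:C%C * y j)
   <= \sum_j a j * nc (y j) + nc z * \sum_j b j * nc (y j).
Proof.
move=> a0 b0; rewrite -lecR -normCE rmorphD rmorphM /= !rmorph_sum /=.
apply: le_trans (ler_normD _ _) _; rewrite normrM; apply: lerD.
  apply: le_trans (ler_norm_sum _ _ _) _; apply: ler_sum => j _.
  by rewrite normrM rmorphM /= -normCE ger0_norm // ler0c.
rewrite normCE ler_wpM2l ?ler0c ?nc_ge0 //.
apply: le_trans (ler_norm_sum _ _ _) _; apply: ler_sum => j _.
by rewrite normrM rmorphM /= -normCE ger0_norm // ler0c.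
Qed.


Arguments real_root_rho {n P s}.
Arguments rho_ge0 {n}.
Arguments rho_ge {n P z}.
Arguments rho_le {n P c}.
Arguments eigvec {n P z}.
Arguments fwd_subst {n p L Y}.
Arguments sum_diag {n}.
Arguments normc_comb {n a b y z}.

Lemma main_thm n (T : 'M[R]_n) :
  substochastic T ->
  lower_hessenberg (1%:M - T) ->
  invertible_M_matrix (1%:M - T) ->
  let A := 1%:M - T in
  let P_GS := invmx (tril A) *m (tril A - A) in
  let P_AGS := invmx (triu A) *m (triu A - A) in
  spectral_radius P_AGS <= spectral_radius P_GS.
Proof.
move=> [T0 Tsum] Hh [s [B [B0 [EA rhoB]]]]; cbv zeta.
set A := 1%:M - T; set PGS := invmx (tril A) *m (tril A - A).
set PAGS := invmx (triu A) *m (triu A - A).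
have Aij i j : A i j = (i == j)%:R - T i j by rewrite /A !mxE.
have F1 : forall s', s <= s' -> \det (s'%:M - B) != 0.
  move=> s' ss'; apply/eqP => d0; have := real_root_rho d0.
  have := rho_ge0 B => h0.
  rewrite ger0_norm; lra.
have F2 : forall z : 'cV_n, nonneg_mx z -> nonneg_mx (- (A *m z)) -> z = 0.
  move=> z z0 hz.
  have : nonneg_mx (- z).
    apply: (invpos B s B0 F1); by rewrite mulmxN -EA.
  move=> h; apply/matrixP => i j; have := h i j; have := z0 i j.
  rewrite !mxE; lra.
have detA : \det A != 0 by rewrite /A EA; apply: F1.
have dpos : forall i, 0 < A i i.
  move=> i; rewrite Aij eqxx subr_gt0 ltNge; apply/negP => h1.
  have Hs := Tsum i; rewrite (bigD1 i) //= in Hs.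
  have Hr0 : 0 <= \sum_(j | j != i) T i j by apply: sumr_ge0 => j _.
  have Hrest : \sum_(j | j != i) T i j = 0.
    by apply/eqP; rewrite eq_le Hr0 andbT; move: (le_trans Hs h1); rewrite gerDl.
  have Tz : forall j, j != i -> T i j = 0.
    by move=> j ji; apply: (psumr_eq0P _ Hrest).
  have rowA : forall j, A i j = 0.
    move=> j; rewrite Aij; case: (eqVneq i j) => [<-|ij].
      by move: Hs; rewrite Hrest addr0 => Hs; apply/eqP; rewrite subr_eq0 eq_le h1 Hs.
    by rewrite Tz 1?eq_sym // subr0.
  move/eqP: detA; apply; rewrite (expand_det_row _ i) big1 // => j _.
  by rewrite rowA mul0r.
have Thess : forall i j : 'I_n, (i.+1 < j)%N -> T i j = 0.
  move=> i j h; have := Hh i j h; rewrite -/A Aij.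
  have -> : (i == j) = false.
    by apply/negbTE; apply/eqP => e; move: h; rewrite e ltnNge leqnSn.
  by rewrite sub0r => /eqP; rewrite oppr_eq0 => /eqP.
pose Lt : 'M[R]_n := \matrix_(i, j) (if (j < i)%N then T i j else 0).
pose Ut : 'M[R]_n := \matrix_(i, j) (if (i < j)%N then T i j else 0).
pose Dm : 'M[R]_n := \matrix_(i, j) (if i == j then A i i else 0).
have Lt0 : nonneg_mx Lt by move=> i j; rewrite mxE; case: ifP.
have Ut0 : nonneg_mx Ut by move=> i j; rewrite mxE; case: ifP.
have Etril : tril A = Dm - Lt.
  apply/matrixP => i j; rewrite !mxE.
  case: (ltngtP i j) => h.
  - have ne : (i == j) = false by apply/negbTE; rewrite neq_ltn h.
    by rewrite ne; rewrite ?(mulr0n, oppr0, sub0r, subr0, addr0, add0r).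
  - have ne : (i == j) = false by apply/negbTE; rewrite neq_ltn h orbT.
    by rewrite ne; rewrite ?(mulr0n, oppr0, sub0r, subr0, addr0, add0r).
  - by rewrite (val_inj h) eqxx ?subr0.
have Etriu : triu A = Dm - Ut.
  apply/matrixP => i j; rewrite !mxE.
  case: (ltngtP i j) => h.
  - have ne : (i == j) = false by apply/negbTE; rewrite neq_ltn h.
    by rewrite ne; rewrite ?(mulr0n, oppr0, sub0r, subr0, addr0, add0r).
  - have ne : (i == j) = false by apply/negbTE; rewrite neq_ltn h orbT.
    by rewrite ne; rewrite ?(mulr0n, oppr0, sub0r, subr0, addr0, add0r).
  - by rewrite (val_inj h) eqxx ?subr0.
have EAm : A = Dm - Lt - Ut.
  apply/matrixP => i j; rewrite !mxE.
  case: (ltngtP i j) => h.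
  - have ne : (i == j) = false by apply/negbTE; rewrite neq_ltn h.
    by rewrite ne; rewrite ?(mulr0n, oppr0, sub0r, subr0, addr0, add0r).
  - have ne : (i == j) = false by apply/negbTE; rewrite neq_ltn h orbT.
    by rewrite ne; rewrite ?(mulr0n, oppr0, sub0r, subr0, addr0, add0r).
  - by rewrite (val_inj h) eqxx !subr0.
have EV : tril A - A = Ut by rewrite Etril EAm opprB addrC subrK.
have EW : triu A - A = Lt by rewrite Etriu EAm zhelp2.
have Lu : tril A \in unitmx.
  rewrite unitmxE unitfE det_trig; last first.
    by apply/is_trig_mxP => i j h; rewrite mxE leqNgt h.
  rewrite gt_eqF // prodr_gt0 // => i _; rewrite mxE leqnn; exact: dpos.
have Uu : triu A \in unitmx.
  rewrite unitmxE unitfE -det_tr det_trig; last first.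
    by apply/is_trig_mxP => i j h; rewrite !mxE leqNgt h.
  rewrite gt_eqF // prodr_gt0 // => i _; rewrite !mxE leqnn; by have := dpos i; rewrite /A !mxE.
have trilP1 : forall i, 0 < tril A i i by move=> i; rewrite mxE leqnn; exact: dpos.
have trilP2 : forall i j : 'I_n, (j < i)%N -> tril A i j <= 0.
  move=> i j h; rewrite Etril !mxE h.
  rewrite (_ : (i == j) = false) ?sub0r ?oppr_le0 //.
  by apply/negbTE; rewrite neq_ltn h orbT.
have trilP3 : forall i j : 'I_n, (i < j)%N -> tril A i j = 0.
  by move=> i j h; rewrite mxE leqNgt h.
have PGSnn : nonneg_mx PGS.
  apply: (fwd_subst trilP1 trilP2 trilP3).
  by rewrite /PGS mulmxA mulmxV // mul1mx EV.
have LtE : forall i j, Lt i j = if (j < i)%N then T i j else 0 by move=> i j; rewrite mxE.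
have UtE : forall i j, Ut i j = if (i < j)%N then T i j else 0 by move=> i j; rewrite mxE.
have DmE : forall i j, Dm i j = if i == j then A i i else 0 by move=> i j; rewrite mxE.
clearbody Lt Ut Dm A.
apply: rho_le; first exact: rho_ge0.
move=> z zin.
have [y y0 hy] := eigvec zin.
have hU : map_mx toC (triu A) *m map_mx toC PAGS = map_mx toC Lt.
  by rewrite /PAGS map_mxM map_invmx mulmxA mulmxV ?map_unitmx // mul1mx EW.
have eq1 : map_mx toC Lt *m y = z *: (map_mx toC (triu A) *m y).
  by rewrite -hU -mulmxA hy scalemxAr.
have Ei : forall i, z * ((A i i)%:C%C * y i 0) =
    \sum_j (Lt i j)%:C%C * y j 0 + z * \sum_j (Ut i j)%:C%C * y j 0.
  move=> i; have := congr1 (fun M : 'cV_n => M i 0) eq1; rewrite /= !mxE Etriu.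
  have S1 : \sum_j map_mx toC Lt i j * y j 0 = \sum_j (Lt i j)%:C%C * y j 0.
    by apply: eq_bigr => j _; rewrite mxE.
  have S2 : \sum_j map_mx toC (Dm - Ut) i j * y j 0 =
      (A i i)%:C%C * y i 0 - \sum_j (Ut i j)%:C%C * y j 0.
    rewrite (eq_bigr (fun j => (Dm i j)%:C%C * y j 0 - (Ut i j)%:C%C * y j 0)); last first.
      by move=> j _; rewrite !mxE rmorphB /= mulrBl.
    rewrite sumrB (bigD1 i) //= big1 ?addr0; last first.
      by move=> j ji; rewrite DmE eq_sym (negbTE ji) mul0r.
    by rewrite DmE eqxx.
  rewrite S1 S2 => ->; ring.
have subE : forall (M N : 'cV[R]_n) i, (M - N) i 0 = M i 0 - N i 0.
  by move=> M N i; rewrite !mxE.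
have oppE : forall (M : 'cV[R]_n) i, (- M) i 0 = - M i 0.
  by move=> M i; rewrite !mxE.
have sclE : forall (M : 'cV[R]_n) c i, (c *: M) i 0 = c * M i 0.
  by move=> M c i; rewrite !mxE.
set m := nc z.
have m0 : 0 <= m := nc_ge0 z.
pose zeta : 'cV[R]_n := \matrix_(j, k) nc (y j k).
have zetaE : forall j, zeta j 0 = nc (y j 0) by move=> j; rewrite mxE.
have zeta0 : nonneg_mx zeta by move=> j k; rewrite mxE nc_ge0.
clearbody zeta.
have zeta_ne0 : zeta != 0.
  apply: contra y0 => /eqP zz; apply/eqP/matrixP => j k; rewrite ord1 mxE.
  by apply: ComplexField.Normc.eq0_normc; rewrite -zetaE zz mxE.
have Dz : forall (v : 'cV[R]_n) i, (Dm *m v) i 0 = A i i * v i 0.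
  move=> v i; rewrite mxE (eq_bigr (fun j => (if i == j then A i i else 0) * v j 0)).
    exact: sum_diag.
  by move=> j _; rewrite DmE.
have Ii : forall i, m * (A i i * zeta i 0) <= (Lt *m zeta) i 0 + m * (Ut *m zeta) i 0.
  move=> i.
  have := normc_comb (a := fun j => Lt i j) (b := fun j => Ut i j)
    (y := fun j => y j 0) (z := z) (fun j => Lt0 i j) (fun j => Ut0 i j).
  rewrite -Ei !ComplexField.Normc.normcM normcR (ger0_norm (ltW (dpos i))) -/m.
  have L1 : (Lt *m zeta) i 0 = \sum_j Lt i j * nc (y j 0).
    by rewrite mxE; apply: eq_bigr => j _; rewrite zetaE.
  have U1 : (Ut *m zeta) i 0 = \sum_j Ut i j * nc (y j 0).
    by rewrite mxE; apply: eq_bigr => j _; rewrite zetaE.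
  by rewrite L1 U1 zetaE.
have [m1 | m1] := lerP 1 m.
  exfalso; apply: (negP zeta_ne0); apply/eqP; apply: F2 => // i k.
  rewrite ord1 EAm !mulmxBl oppE !subE Dz.
  have := Ii i; have : 0 <= (Lt *m zeta) i 0 by apply: nnM.
  have : 0 <= (Ut *m zeta) i 0 by apply: nnM.
  have : 0 <= A i i * zeta i 0 by rewrite mulr_ge0 // ltW.
  nra.
have := m0; rewrite le_eqVlt => /orP[/eqP <-|mpos]; first exact: rho_ge0.
rewrite leNgt; apply/negP => hlt.
have Hd : forall s', m <= s' -> \det (s'%:M - PGS) != 0.
  move=> s' ms'; apply/eqP => d0; have := real_root_rho d0.
  have := rho_ge0 PGS; rewrite ger0_norm; lra.
pose w : 'cV[R]_n := \matrix_(j, k) (m ^+ j * zeta j k).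
have wE : forall j, w j 0 = m ^+ j * zeta j 0 by move=> j; rewrite mxE.
have wnn : nonneg_mx w by move=> j k; rewrite mxE mulr_ge0 ?exprn_ge0.
clearbody w.
have key : nonneg_mx (PGS *m w - m *: w).
  apply: (fwd_subst trilP1 trilP2 trilP3).
  rewrite mulmxBr -scalemxAr mulmxA {1}/PGS mulmxA mulmxV // mul1mx EV Etril.
  move=> i k; rewrite ord1 subE sclE mulmxBl subE Dz wE.
  have Uw : (Ut *m w) i 0 = m ^+ i.+1 * (Ut *m zeta) i 0.
    rewrite !mxE mulr_sumr; apply: eq_bigr => j _; rewrite wE UtE.
    case: ifP => h; last by rewrite !mul0r mulr0.
    have [ej|nej] := eqVneq (nat_of_ord j) i.+1; first by rewrite ej; ring.
    rewrite Thess ?mul0r ?mulr0 //.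
    by rewrite ltn_neqAle eq_sym nej h.
  have Lw : m ^+ i * (Lt *m zeta) i 0 <= m * (Lt *m w) i 0.
    rewrite !mxE !mulr_sumr; apply: ler_sum => j _; rewrite wE LtE.
    case: ifP => h; last by rewrite !mul0r !mulr0.
    have hp : m ^+ i <= m ^+ j.+1 by apply: ler_wiXn2l => //; exact: ltW.
    have := T0 i j; have := zeta0 j 0; rewrite exprS in hp.
    move=> z0 t0; have X0 : 0 <= T i j * zeta j 0 by apply: mulr_ge0.
    rewrite (_ : m * (T i j * (m ^+ j * zeta j 0)) = m * m ^+ j * (T i j * zeta j 0)).
      exact: ler_wpM2r.
    ring.
  have := ler_wpM2l (exprn_ge0 i m0) (Ii i).
  rewrite Uw exprS; nra.
have : nonneg_mx (- w).
  apply: (invpos PGS m PGSnn Hd).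
  by rewrite mulmxN mulmxBl mul_scalar_mx opprB.
move=> hw; apply: (negP zeta_ne0); apply/eqP/matrixP => j k; rewrite ord1 mxE.
have := hw j 0; have := wnn j 0; rewrite oppE wE => h1 h2.
have : m ^+ j * zeta j 0 = 0 by lra.
move/eqP; rewrite mulf_eq0 expf_eq0 (gt_eqF mpos) andbF /=.
by move/eqP.
Qed.

End Main.

Theorem theorem8 (R : rcfType) (n : nat) (T : 'M[R]_n) :
  substochastic T ->
  lower_hessenberg (1%:M - T) ->
  invertible_M_matrix (1%:M - T) ->
  let A := 1%:M - T in
  let P_GS := invmx (tril A) *m (tril A - A) in
  let P_AGS := invmx (triu A) *m (triu A - A) in
  spectral_radius P_AGS <= spectral_radius P_GS.
Proof. exact: main_thm. Qed.
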